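(* Let $(N,\langle\cdot,\cdot\rangle,\varphi)$ be a modified $H$-type group (see context). Let $z,z'\in\mathfrak z$ and $e,e'\in\mathfrak v$ be pseudo-orthonormal, i.e. $\langle z,z\rangle,\langle z',z'\rangle,\langle e,e\rangle,\langle e',e'\rangle\in\{\pm1\}$, $\langle z,z'\rangle=0$ and $\langle e,e'\rangle=0$. Then the sectional curvatures satisfy $$K(z,z')=0,\qquad K(z,e)=\tfrac14\,\varepsilon_z\,\varphi(z),\qquad K(e,e')=-\tfrac34\,\varepsilon_e\,\varepsilon_{e'}\,\langle [e,e'],[e,e']\rangle,$$ where $\varepsilon_u=\langle u,u\rangle=\pm1$ for $u\in\{z,e,e'\}$.
   Context: Let $N$ be a 2-step nilpotent real Lie group with Lie algebra $\mathfrak n$, Lie bracket $[\cdot,\cdot]$ and center $\mathfrak z$, endowed with a left-invariant pseudo-Riemannian metric $\langle\cdot,\cdot\rangle$ (identified with an inner product on $\mathfrak n$) for which $\mathfrak z$ is nondegenerate. Put $\mathfrak v=\mathfrak z^\perp$, so $\mathfrak n=\mathfrak z\oplus\mathfrak v$ orthogonally. For $z\in\mathfrak z$ define the skew-adjoint endomorphism $j(z)$ of $\mathfrak v$ by $\langle [x,y],z\rangle=\langle y,j(z)x\rangle$ for all $x,y\in\mathfrak v$. Given a quadratic form $\varphi$ on $\mathfrak z$, the triple $(N,\langle\cdot,\cdot\rangle,\varphi)$ is called a modified $H$-type group if $\langle j(z)x,j(z)y\rangle=\varphi(z)\langle x,y\rangle$ for all $z\in\mathfrak z$, $x,y\in\mathfrak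 v$; equivalently $j(z)^2=-\varphi(z)\,\mathrm{Id}_{\mathfrak v}$ for all $z\in\mathfrak z$. ($\varphi$ may be indefinite or degenerate.) Sectional curvature of a nondegenerate plane spanned by $u,w$ is $K(u,w)=\langle R(u,w)w,u\rangle/(\langle u,u\rangle\langle w,w\rangle-\langle u,w\rangle^2)$ for the Levi-Civita curvature tensor $R$. *)

(* Defs.v *)
(* Left-invariant pseudo-Riemannian geometry of a 2-step
   nilpotent Lie group, modelled on its Lie algebra n = R^n (row vectors). *)
From HB Require Import structures.
From mathcomp Require Import all_boot all_order all_algebra.
Set Implicit Arguments. Unset Strict Implicit. Unset Printing Implicit Defensive.
Import Order.TTheory GRing.Theory Num.Theory.
Local Open Scope ring_scope.

Definition ip (R : realFieldType) (n : nat) (g : 'M[R]_n) (x y : 'rV[R]_n) : R :=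
  (x *m g *m y^T) 0 0.

Definition in_center (R : realFieldType) (n : nat)
  (br : 'rV[R]_n -> 'rV[R]_n -> 'rV[R]_n) (x : 'rV[R]_n) : Prop :=
  forall y, br x y = 0.

Definition in_v (R : realFieldType) (n : nat) (g : 'M[R]_n)
  (br : 'rV[R]_n -> 'rV[R]_n -> 'rV[R]_n) (x : 'rV[R]_n) : Prop :=
  forall z, in_center br z -> ip g x z = 0.

(* nab is the Levi-Civita connection on left-invariant fields:
   Koszul formula 2<nab_x y, w> = <[x,y],w> - <[y,w],x> + <[w,x],y>. *)
Definition is_levi_civita (R : realFieldType) (n : nat) (g : 'M[R]_n)
  (br : 'rV[R]_n -> 'rV[R]_n -> 'rV[R]_n)
  (nab : 'rV[R]_n -> 'rV[R]_n -> 'rV[R]_n) : Prop :=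
  forall x y w, ip g (nab x y) w =
    2^-1 * (ip g (br x y) w - ip g (br y w) x + ip g (br w x) y).

Definition curv (R : realFieldType) (n : nat)
  (br nab : 'rV[R]_n -> 'rV[R]_n -> 'rV[R]_n) (u w v : 'rV[R]_n) : 'rV[R]_n :=
  nab u (nab w v) - nab w (nab u v) - nab (br u w) v.

Definition secK (R : realFieldType) (n : nat) (g : 'M[R]_n)
  (br nab : 'rV[R]_n -> 'rV[R]_n -> 'rV[R]_n) (u w : 'rV[R]_n) : R :=
  ip g (curv br nab u w w) u / (ip g u u * ip g w w - ip g u w ^+ 2).

(* Main.v *)
Require Import Defs.
From HB Require Import structures.
From mathcomp Require Import all_boot all_order all_algebra.
From mathcomp Require Import ring lra.
Import Order.TTheory GRing.Theory Num.Theory.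
Local Open Scope ring_scope.

Theorem theorem3p3 (R : realFieldType) (n : nat)
  (g : 'M[R]_n) (br : 'rV[R]_n -> 'rV[R]_n -> 'rV[R]_n)
  (j : 'rV[R]_n -> 'rV[R]_n -> 'rV[R]_n) (phi : 'rV[R]_n -> R)
  (nab : 'rV[R]_n -> 'rV[R]_n -> 'rV[R]_n)
  (* nondegenerate symmetric inner product *)
  (g_sym : g^T = g) (g_nd : g \in unitmx)
  (* Lie bracket: bilinear, antisymmetric, 2-step nilpotent *)
  (br_lin : forall (a : R) x y w, br (a *: x + y) w = a *: br x w + br y w)
  (br_anti : forall x y, br x y = - br y x)
  (br_2step : forall x y w, br (br x y) w = 0)
  (br_nonab : exists x y, br x y != 0)
  (* the center is nondegenerate *)
  (z_nd : forall x, in_center br x ->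
            (forall y, in_center br y -> ip g x y = 0) -> x = 0)
  (* j(z) : v -> v with <[x,y],z> = <y, j(z)x> for x, y in v *)
  (j_v : forall z x, in_center br z -> in_v g br x -> in_v g br (j z x))
  (j_def : forall z x y, in_center br z -> in_v g br x -> in_v g br y ->
            ip g (br x y) z = ip g y (j z x))
  (* phi is a quadratic form on z *)
  (phi_quad : exists Phi : 'M[R]_n, Phi^T = Phi /\
            forall z, in_center br z -> phi z = (z *m Phi *m z^T) 0 0)
  (* modified H-type condition *)
  (Htype : forall z x y, in_center br z -> in_v g br x -> in_v g br y ->
            ip g (j z x) (j z y) = phi z * ip g x y)
  (* Levi-Civita connection of the left-invariant metric *)
  (nab_LC : is_levi_civita g br nab)
  (z z' e e' : 'rV[R]_n)
  (hz : in_center br z) (hz' : in_center br z')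
  (he : in_v g br e) (he' : in_v g br e')
  (nz : ip g z z = 1 \/ ip g z z = -1) (nz' : ip g z' z' = 1 \/ ip g z' z' = -1)
  (ne : ip g e e = 1 \/ ip g e e = -1) (ne' : ip g e' e' = 1 \/ ip g e' e' = -1)
  (ozz : ip g z z' = 0) (oee : ip g e e' = 0) :
  secK g br nab z z' = 0 /\
  secK g br nab z e = 4^-1 * ip g z z * phi z /\
  secK g br nab e e' =
    - (3 / 4) * ip g e e * ip g e' e' * ip g (br e e') (br e e').
Proof.
have ipC : forall x y, ip g x y = ip g y x.
  move=> x y; rewrite /ip.
  have h : forall A : 'M[R]_1, A 0 0 = A^T 0 0 by move=> A; rewrite mxE.
  by rewrite h !trmx_mul trmxK g_sym mulmxA.
have ipBl : forall x y w, ip g (x - y) w = ip g x w - ip g y w.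
  by move=> x y w; rewrite /ip !mulmxBl !mxE.
have ip0l : forall w, ip g 0 w = 0.
  by move=> w; rewrite /ip !mul0mx mxE.
have ip0r : forall w, ip g w 0 = 0.
  by move=> w; rewrite ipC ip0l.
have ipNl : forall x w, ip g (- x) w = - ip g x w.
  by move=> x w; rewrite -sub0r ipBl ip0l sub0r.
have br0l : forall w, br 0 w = 0.
  move=> w; have := br_lin 1 0 0 w; rewrite !scale1r addr0 => h.
  by apply: (addrI (br 0 w)); rewrite addr0 -h.
have brxx : forall x, br x x = 0.
  move=> x; have h : br x x + br x x = 0 by rewrite {1}br_anti addNr.
  have two : (1 + 1 : R) != 0 by rewrite -mulr2n pnatr_eq0.
  rewrite -[LHS]scale1r -(mulVf two) -scalerA scalerDl scale1r h.
  by rewrite scaler0.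
have cenR : forall c y, in_center br c -> br y c = 0.
  by move=> c y hc; rewrite br_anti hc oppr0.
have cenB : forall x y w, br w (br x y) = 0.
  by move=> x y w; apply: cenR; apply: br_2step.
have vc : forall x c, in_v g br x -> in_center br c -> ip g c x = 0.
  by move=> x c hx hc; rewrite ipC; apply: hx.
have vbr : forall x a b, in_v g br x -> ip g (br a b) x = 0.
  by move=> x a b hx; apply: vc => //; apply: br_2step.
have N1 : ip g (curv br nab z z' z') z = 0.
  rewrite /curv !ipBl !nab_LC hz hz' !(cenR z) // !(cenR z') // !ip0l ?ip0r.
  rewrite hz ip0l; lra.
have hX : in_v g br (nab z e).
  move=> c hc; rewrite nab_LC hz (cenR c) // hc !ip0l; lra.
have hj : in_v g br (j z e) by apply: j_v.
have N2 : ip g (curv br nab z e e) z = 4^-1 * phi z * ip g e e.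
  rewrite /curv !ipBl.
  rewrite [ip g (nab z _) z]nab_LC hz (cenR z) // !ip0l.
  rewrite [ip g (nab (br z e) _) z]nab_LC !hz ?br0l ?(cenR z) // !ip0l ?ip0r.
  rewrite [ip g (nab e _) z]nab_LC hz ip0l (cenR z) // ip0l.
  rewrite j_def // nab_LC hz ip0l (cenR z) // ip0l.
  rewrite j_def // Htype //; lra.
have cc : in_center br (br e e') by move=> w; apply: br_2step.
have hXc : ip g (br e e') (nab e e') = 2^-1 * ip g (br e e') (br e e').
  rewrite ipC nab_LC (cenR _ _ cc) ip0l br_2step ip0l; lra.
have N3 : ip g (curv br nab e e' e') e = - (3 / 4) * ip g (br e e') (br e e').
  rewrite /curv !ipBl.
  rewrite [ip g (nab e (nab e' e')) e]nab_LC brxx ip0l !(vbr e _ _ he).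
  rewrite [ip g (nab e' (nab e e')) e]nab_LC (vbr e _ _ he) (vbr e' _ _ he') hXc.
  rewrite nab_LC br_2step ip0l (cenR _ _ cc) ip0l.
  rewrite (br_anti e' e) ipNl; lra.
have zee : ip g z e = 0 by apply: vc.
have eee : ip g e e' = 0 by [].
split; first by rewrite /secK N1 mul0r.
split.
  rewrite /secK N2 zee.
  by case: nz => ->; case: ne => ->; field.
rewrite /secK N3 oee.
by case: ne => ->; case: ne' => ->; field.
Qed.
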